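(* Let $\vec E$ be as in the context and fix an edge $b\in\Lambda^*$. The map $J_\Lambda\mapsto F_b(J_\Lambda)$ on $\mathbb{R}^{\Lambda^*}\setminus\mathcal C$ is a piecewise affine function with $$\frac{\partial F_b}{\partial J_e}(J_\Lambda)=\begin{cases}2\sigma_e(J_\Lambda)&\text{if } e\in\partial\mathcal D_b(J_\Lambda),\\ 0&\text{otherwise.}\end{cases}$$ Furthermore, this map extends uniquely to a continuous function on $\mathbb{R}^{\Lambda^*}$.
   Context: $\Lambda\subset\mathbb{Z}^d$ is a finite box, $\Lambda^*$ its set of nearest-neighbour edges. For spins $\eta$ and $e=\{x,y\}$, $\eta_e=\eta_x\eta_y$; $\mathcal S_\Lambda\subset\{-1,1\}^{\Lambda^*}$ is the set of edge configurations induced by spin configurations on $\Lambda$. $H_{\Lambda,J}(\eta)=-\sum_{e\in\Lambda^*}J_e\eta_e$ for $J_\Lambda\in\mathbb{R}^{\Lambda^*}$. $\vec E=(E(\eta,\eta'))_{\eta,\eta'\in\mathcal S_\Lambda}$ is a family of reals with $E(\eta,\eta)=0$ and $E(\eta,\eta'')=E(\eta,\eta')+E(\eta',\eta'')$. Critical set $\mathcal C=\bigcup_{\eta\ne\eta'}\{J_\Lambda:\sum_eJ_e(\eta_e-\eta'_e)=E(\eta,\eta')\}$. For $J_\Lambda\notin\mathcal C$, $\eta\prec\eta'$ iff $E(\eta,\eta')+H_{\Lambda,J}(\eta)-H_{\Lambda,J}(\eta')<0$, which is a strict total order on $\mathcal S_\Lambda$; $\sigma(J_\Lambda)$ is the $\prec$-minimal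 element (ground state map), and $\sigma^{\pm,b}(J_\Lambda)$ the $\prec$-minimal element among $\eta$ with $\eta_b=\pm1$. The critical droplet boundary is $\partial\mathcal D_b(J_\Lambda)=\{e\in\Lambda^*:\sigma^{+,b}_e(J_\Lambda)\ne\sigma^{-,b}_e(J_\Lambda)\}$, and the flexibility of $b$ is $$F_b(J_\Lambda)=\Big|-\sum_{e\in\Lambda^*}J_e\big(\sigma^{+,b}_e(J_\Lambda)-\sigma^{-,b}_e(J_\Lambda)\big)+E\big(\sigma^{+,b}(J_\Lambda),\sigma^{-,b}(J_\Lambda)\big)\Big|.$$ *)

(* Defs.v *)
From HB Require Import structures.
From mathcomp Require Import all_boot all_order all_algebra.
From mathcomp Require Import all_classical all_reals all_analysis.
Set Implicit Arguments. Unset Strict Implicit. Unset Printing Implicit Defensive.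
Import Order.TTheory GRing.Theory Num.Theory.
Local Open Scope ring_scope.

Section Ising.
Variable R : realType.
Variable d : nat.
(* side lengths of the box: the box is {0..n_0-1} x ... x {0..n_(d-1)-1},
   i.e. a finite box in Z^d up to translation *)
Variable n : 'I_d -> nat.

Definition site := {dffun forall i : 'I_d, 'I_(n i)}.

(* nearest neighbours: l^1 distance equal to 1 *)
Definition adj (x y : site) : bool :=
  (\sum_(i < d) ((x i - y i) + (y i - x i)))%N == 1%N.

Definition is_edge (e : {set site}) : bool :=
  [exists x, exists y, adj x y && (e == [set x; y])].

Definition edge := {e : {set site} | is_edge e}.

(* spin configurations on Lambda (true = +1, false = -1) *)
Definition spin := {ffun site -> bool}.
(* edge configurations in {-1,1}^{Lambda^*} (true = +1, false = -1) *)
Definition ecfg := {ffun edge -> bool}.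

Definition sgn (b : bool) : R := if b then 1 else -1.

(* eta_e = eta_x eta_y for e = {x,y} *)
Definition induced (s : spin) : ecfg :=
  [ffun e : edge => [forall x in val e, forall y in val e, s x == s y]].

Definition SL : {set ecfg} := [set induced s | s : spin].

Definition Ham (J : edge -> R) (eta : ecfg) : R :=
  - \sum_(e : edge) J e * sgn (eta e).

Variable E : ecfg -> ecfg -> R.

Definition critical (J : edge -> R) : Prop :=
  exists eta eta', [/\ eta \in SL, eta' \in SL, eta != eta' &
    \sum_(e : edge) J e * (sgn (eta e) - sgn (eta' e)) = E eta eta'].

Definition prec (J : edge -> R) (eta eta' : ecfg) : bool :=
  E eta eta' + Ham J eta - Ham J eta' < 0.

(* the prec-minimal element of S_Lambda among those satisfying P
   (a junk default value is returned if none exists, e.g. on C) *)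
Definition argmin_prec (J : edge -> R) (P : pred ecfg) : ecfg :=
  odflt [ffun=> true]
    [pick eta in SL | P eta &&
       [forall eta', ((eta' \in SL) && P eta' && (eta' != eta)) ==>
                     prec J eta eta']].

Definition gs (J : edge -> R) : ecfg := argmin_prec J predT.

(* sigma^{+,b}(J) (pm = true) and sigma^{-,b}(J) (pm = false) *)
Definition gs_b (J : edge -> R) (b : edge) (pm : bool) : ecfg :=
  argmin_prec J (fun eta => eta b == pm).

Definition droplet_boundary (J : edge -> R) (b : edge) : {set edge} :=
  [set e | gs_b J b true e != gs_b J b false e].

Definition flex (b : edge) (J : edge -> R) : R :=
  `| - (\sum_(e : edge) J e * (sgn (gs_b J b true e) - sgn (gs_b J b false e)))
     + E (gs_b J b true) (gs_b J b false) |.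

Definition coupling_shift (J : edge -> R) (e : edge) (t : R) : edge -> R :=
  fun e' => J e' + (if e' == e then t else 0).

End Ising.

(* Main.v *)
Require Import Defs.
From HB Require Import structures.
From mathcomp Require Import all_boot all_order all_algebra.
From mathcomp Require Import all_classical all_reals all_analysis.
From mathcomp Require Import lra ring.
Import Order.TTheory GRing.Theory Num.Theory.
Import numFieldNormedType.Exports ArrowAsUniformType.
Local Open Scope ring_scope.

Section Pow2.
Variable R : realType.

Lemma pow2_bound N (c : 'I_N -> R) (a : R) : 0 <= a -> (forall i, `|c i| <= a) ->
  `|\sum_(i < N) c i * 2 ^+ i| <= a * (2 ^+ N - 1).
Proof.
move=> a0 hc; elim: N c hc => [|N IH] c hc.
  by rewrite big_ord0 normr0 expr0 subrr mulr0.
rewrite big_ord_recr /=.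
have h1 := IH (fun i => c (widen_ord (leqnSn N) i)) (fun i => hc _).
have h2 : `|c ord_max * 2 ^+ N| <= a * 2 ^+ N.
  rewrite normrM (ger0_norm (exprn_ge0 _ _)) //; apply: ler_wpM2r => //.


apply: (le_trans (ler_normD _ _)).
have -> : a * (2 ^+ N.+1 - 1) = a * (2 ^+ N - 1) + a * 2 ^+ N.
  by rewrite exprS; ring.
exact: lerD.
Qed.


Lemma pow2_inj N (c : 'I_N -> R) (a : R) : 0 < a -> (forall i, c i = 0 \/ `|c i| = a) ->
  \sum_(i < N) c i * 2 ^+ i = 0 -> forall i, c i = 0.
Proof.
move=> a0; elim: N c => [|N IH] c hc hs i; first by case: i.
move: hs; rewrite big_ord_recr /= => hs.
have hN : c ord_max = 0.
  case: (hc ord_max) => // hmax; exfalso.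
  have hca : forall i, `|c i| <= a.
    by move=> j; case: (hc j) => ->; [rewrite normr0; exact: ltW|].
  have hb := @pow2_bound N (fun i => c (widen_ord (leqnSn N) i)) a (ltW a0)
    (fun i => hca _).
  move: hb; have -> : \sum_(i < N) c (widen_ord (leqnSn N) i) * 2 ^+ i =
     - (c ord_max * 2 ^+ N) by apply/eqP; rewrite -addr_eq0 hs.
  rewrite normrN normrM hmax (ger0_norm (exprn_ge0 _ _)) //.
  have : 0 < 2 ^+ N :> R by apply: exprn_gt0.
  move=> hp; nra.
move: hs; rewrite hN mul0r addr0 => hs.
have IH' := IH (fun i => c (widen_ord (leqnSn N) i)) (fun i => hc _) hs.
have [lt|ge] := ltnP i N.
  have -> : i = widen_ord (leqnSn N) (Ordinal lt) by apply: val_inj.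
  exact: IH'.
have -> : i = ord_max by apply: val_inj => /=; apply/eqP; rewrite eqn_leq ge -ltnS ltn_ord.
exact: hN.
Qed.
End Pow2.

Set Implicit Arguments. Unset Strict Implicit.
Section Main.
Variables (R : realType) (d : nat) (n : 'I_d -> nat).
Variable (E : ecfg n -> ecfg n -> R).
Hypothesis hE0 : forall eta, eta \in SL n -> E eta eta = 0.
Hypothesis hEc : forall eta eta' eta'', eta \in SL n -> eta' \in SL n -> eta'' \in SL n ->
           E eta eta'' = E eta eta' + E eta' eta''.
Variable b : edge n.

Local Notation T := (edge n).
Local Notation cfg := (ecfg n).
Local Notation sg := (sgn R).

Definition lin (J : T -> R) (x : cfg) : R := \sum_e J e * sg (x e).
Definition eta0 : cfg := Defs.induced ([ffun => true] : spin n).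
Lemma eta0_SL : eta0 \in SL n. Proof. by apply/imsetP; exists [ffun => true]. Qed.
Definition V J x := E x eta0 - lin J x.

Lemma E_diff x y : x \in SL n -> y \in SL n -> E x y = E x eta0 - E y eta0.
Proof.
move=> hx hy; rewrite (hEc hx eta0_SL hy).
have := hEc hy eta0_SL hy; rewrite hE0 // => h.
have -> : E eta0 y = - E y eta0 by lra.
done.
Qed.

Lemma precV J x y : x \in SL n -> y \in SL n -> prec E J x y = (V J x < V J y).
Proof.
move=> hx hy; rewrite /prec /Ham /V E_diff // -[in RHS]subr_lt0.
congr (_ < _); rewrite /lin; ring.
Qed.

Lemma sum_diff J (x y : cfg) :
  \sum_(e : T) J e * (sg (x e) - sg (y e)) = lin J x - lin J y.
Proof. by rewrite /lin -sumrB; apply: eq_bigr => e _; rewrite mulrBr. Qed.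

Lemma ncV J : ~ critical E J -> forall x y, x \in SL n -> y \in SL n -> x != y ->
  V J x != V J y.
Proof.
move=> nc x y hx hy nxy; apply/eqP => eqV; apply: nc; exists x, y; split => //.
rewrite sum_diff E_diff //; move: eqV; rewrite /V; lra.
Qed.

Lemma Vnc J : (forall x y, x \in SL n -> y \in SL n -> x != y -> V J x != V J y) ->
  ~ critical E J.
Proof.
move=> hV [x [y [hx hy nxy]]]; rewrite sum_diff E_diff // => h.
by move/eqP: (hV x y hx hy nxy); apply; rewrite /V; lra.
Qed.

Lemma argmin_eq J (P : pred cfg) x : ~ critical E J -> x \in SL n -> P x ->
  (forall y, y \in SL n -> P y -> V J x <= V J y) -> argmin_prec E J P = x.
Proof.
move=> nc hx Px hmin; rewrite /argmin_prec.
case: pickP => [z /andP[hz /andP[Pz /forallP hz']] | none] /=.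
  apply/eqP; apply/negPn/negP => nzx.
  have := hz' x; rewrite hx Px eq_sym nzx /= precV //.
  by rewrite ltNge hmin.
have := none x; rewrite hx Px /=.
suff -> : [forall eta', (eta' \in SL n) && P eta' && (eta' != x) ==> prec E J x eta'] by [].
apply/forallP => y; apply/implyP => /andP[/andP[hy Py] nyx].
by rewrite precV // lt_neqAle hmin // andbT; apply: ncV => //; rewrite eq_sym.
Qed.

Lemma ex_pm pm : exists x, (x \in SL n) && (x b == pm).
Proof.
case: pm.
  exists eta0; rewrite eta0_SL /=; apply/eqP; rewrite /eta0 /Defs.induced ffunE.
  by apply/forallP => x; apply/implyP => _; apply/forallP => y; apply/implyP => _; rewrite !ffunE.
have := valP b; case/existsP => x0 /existsP [y0 /andP[hadj /eqP hb]].
have nxy : x0 != y0.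
  apply/eqP => exy; move: hadj; rewrite /Defs.adj exy.
  by rewrite big1 // => i _; rewrite subnn.
exists (Defs.induced ([ffun z => z == x0] : spin n)); apply/andP; split.
  by apply/imsetP; exists [ffun z => z == x0].
rewrite /Defs.induced ffunE eqbF_neg; apply/negP => /forallP H.
have := H x0; rewrite hb set21 /= => /forallP H2.
have := H2 y0; rewrite set22 /= !ffunE eqxx.
by rewrite (eq_sym y0 x0) (negbTE nxy).
Qed.

Definition wit pm : cfg := odflt eta0 [pick x in SL n | x b == pm].
Lemma wit_spec pm : (wit pm \in SL n) && (wit pm b == pm).
Proof.
rewrite /wit; case: pickP => [x hx|none] //=.
by case: (ex_pm pm) => x hx; move: (none x); rewrite hx.
Qed.

Definition amin J pm : cfg :=
  Order.arg_min (wit pm) (fun x => (x \in SL n) && (x b == pm)) (V J).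

Lemma amin_spec J pm : [/\ amin J pm \in SL n, amin J pm b == pm &
  forall y, y \in SL n -> y b == pm -> V J (amin J pm) <= V J y].
Proof.
rewrite /amin; case: arg_minP; first exact: wit_spec.
move=> x /andP[hx hb] hmin; split => // y hy hyb.
by apply: hmin; rewrite hy hyb.
Qed.

Lemma gs_b_amin J pm : ~ critical E J -> gs_b E J b pm = amin J pm.
Proof.
move=> nc; case: (amin_spec J pm) => h1 h2 h3.
by apply: argmin_eq.
Qed.

Definition mval J pm := V J (amin J pm).
Definition G J := `|mval J true - mval J false|.

Lemma flex_G J : ~ critical E J -> flex E b J = G J.
Proof.
move=> nc; rewrite /flex /G /mval !gs_b_amin //.
case: (amin_spec J true) => h1 _ _; case: (amin_spec J false) => h2 _ _.
rewrite sum_diff E_diff //; congr `| _ |; rewrite /V; ring.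
Qed.


Definition S (J J' : T -> R) := \sum_(e : T) `|J e - J' e|.

Lemma sg_norm (c : bool) : `|sg c| = 1.
Proof. by case: c; rewrite /sgn ?normrN normr1. Qed.

Lemma V_lip J J' x : `|V J x - V J' x| <= S J J'.
Proof.
have -> : V J x - V J' x = \sum_(e : T) (J' e * sg (x e) - J e * sg (x e)).
  by rewrite sumrB /V /lin; ring.
apply: (le_trans (ler_norm_sum _ _ _)); apply: ler_sum => e _.
by rewrite -mulrBl normrM sg_norm mulr1 distrC.
Qed.

Lemma mval_lip J J' pm : `|mval J pm - mval J' pm| <= S J J'.
Proof.
have [h1 h2 h3] := amin_spec J pm; have [h1' h2' h3'] := amin_spec J' pm.
have l1 := h3 _ h1' h2'; have l2 := h3' _ h1 h2.
have := V_lip J J' (amin J' pm); have := V_lip J J' (amin J pm).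
rewrite /mval !ler_norml => /andP[a1 a2] /andP[b1 b2]; apply/andP; split; lra.
Qed.

Lemma G_lip J J' : `|G J - G J'| <= 2 * S J J'.
Proof.
apply: (le_trans (ler_dist_dist _ _)).
have -> : mval J true - mval J false - (mval J' true - mval J' false) =
  (mval J true - mval J' true) - (mval J false - mval J' false) by ring.
apply: (le_trans (ler_normB _ _)).
have := mval_lip J J' true; have := mval_lip J J' false; lra.
Qed.

Lemma S_ball (J : T -> R) (eps : R) : 0 < eps -> \forall J' \near J, S J J' < eps.
Proof.
move=> e0.
pose N : R := #|{: T}|%:R.
have N0 : 0 <= N by apply: ler0n.
have N1 : N + 1 != 0 by apply/negP => /eqP; lra.
pose r := eps / (N + 1).
have r0 : 0 < r by apply: divr_gt0 => //; lra.
apply/nbhs_ballP; exists r => // J' HJ.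
have hS : S J J' <= r * N.
  apply: (le_trans (y := \sum_(e : T) r)); first by apply: ler_sum => e _; exact: ltW (HJ e).
  rewrite sumr_const /N mulr_natr. by [].
have hr : r * (N + 1) = eps by rewrite /r divfK.
move: hr; rewrite mulrDr mulr1 => hr; lra.
Qed.

Lemma near_lt (J : T -> R) x y : V J x < V J y -> \forall J' \near J, V J' x < V J' y.
Proof.
move=> h; have d0 : 0 < (V J y - V J x) / 2 by apply: divr_gt0 => //; lra.
apply: filterS (@S_ball J _ d0) => J' hS.
have := V_lip J J' x; have := V_lip J J' y.
rewrite !ler_norml => /andP[a1 a2] /andP[b1 b2]; lra.
Qed.

Lemma near_order (J : T -> R) : \forall J' \near J,
  forall p : cfg * cfg, V J p.1 < V J p.2 -> V J' p.1 < V J' p.2.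
Proof.
apply: (filter_forall (nbhs_filter J)) => p.
case h: (V J p.1 < V J p.2).
  by apply: filterS (near_lt h) => J' H _.
by apply: nearW => J' H.
Qed.

Lemma stable J J' : ~ critical E J ->
  (forall p : cfg * cfg, V J p.1 < V J p.2 -> V J' p.1 < V J' p.2) ->
  ~ critical E J' /\ forall pm, gs_b E J' b pm = amin J pm.
Proof.
move=> nc H.
have nc' : ~ critical E J'.
  apply: Vnc => x y hx hy nxy.
  have := ncV nc hx hy nxy; rewrite neq_lt => /orP[h|h].
    by have := H (x, y) h => /= h'; rewrite lt_eqF.
  by have := H (y, x) h => /= h'; rewrite gt_eqF.
split => // pm; have [h1 h2 h3] := amin_spec J pm.
apply: argmin_eq => // y hy hyb.
have [<-|nay] := eqVneq (amin J pm) y; first exact: lexx.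
apply: ltW; apply: (H (amin J pm, y)) => /=.
by rewrite lt_neqAle h3 // andbT; apply: ncV.
Qed.

Definition aP J := amin J true.
Definition aM J := amin J false.
Definition sJ J := V J (aP J) < V J (aM J).

Lemma aPM_neq J : aP J != aM J.
Proof.
have [_ h1 _] := amin_spec J true; have [_ h2 _] := amin_spec J false.
by apply/eqP => e; move: h1 h2; rewrite -/(aP J) -/(aM J) e => /eqP ->.
Qed.

Lemma flex_local (J : T -> R) : ~ critical E J -> \forall J' \near J,
  flex E b J' = sg (sJ J) * (V J' (aM J) - V J' (aP J)).
Proof.
move=> nc; apply: filterS (near_order J) => J' H.
have [nc' hg] := stable nc H.
have [h1 _ _] := amin_spec J true; have [h2 _ _] := amin_spec J false.
rewrite /flex !hg sum_diff E_diff //.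
have -> : - (lin J' (amin J true) - lin J' (amin J false)) +
    (E (amin J true) eta0 - E (amin J false) eta0) =
    V J' (aP J) - V J' (aM J) by rewrite /V /aP /aM; ring.
rewrite /sJ; case hs: (V J (aP J) < V J (aM J)).
  have := H (aP J, aM J) hs => /= h.
  rewrite ltr0_norm /sgn; [ring | lra].
have hne := ncV nc h1 h2 (aPM_neq J).
have h' : V J (aM J) < V J (aP J).
  by move: hne hs; rewrite /aP /aM; case: (ltgtP (V J (amin J true)) (V J (amin J false))).
have := H (aM J, aP J) h' => /= h.
rewrite gtr0_norm /sgn; [ring | lra].
Qed.

Lemma gs_eq J : ~ critical E J -> gs E J = if sJ J then aP J else aM J.
Proof.
move=> nc; have [h1 h1b h1m] := amin_spec J true.
have [h2 h2b h2m] := amin_spec J false.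
have hne := ncV nc h1 h2 (aPM_neq J).
rewrite /gs /sJ; case hs: (V J (aP J) < V J (aM J)).
  apply: argmin_eq => // y hy _; case hyb: (y b).
    by apply: h1m => //; rewrite hyb.
  by apply: (le_trans (ltW hs)); apply: h2m => //; rewrite hyb.
have h' : V J (aM J) < V J (aP J).
  by move: hne hs; rewrite /aP /aM; case: (ltgtP (V J (amin J true)) (V J (amin J false))).
apply: argmin_eq => // y hy _; case hyb: (y b).
  by apply: (le_trans (ltW h')); apply: h1m => //; rewrite hyb.
by apply: h2m => //; rewrite hyb.
Qed.

End Main.

Set Implicit Arguments. Unset Strict Implicit.
Section Main2.
Variables (R : realType) (d : nat) (n : 'I_d -> nat).
Local Notation T := (edge n).
Local Notation cfg := (ecfg n).
Local Notation sg := (sgn R).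

Lemma lin_shift (J v : T -> R) (t : R) (x : cfg) :
  lin (fun e => J e + t * v e) x = lin J x + t * lin v x.
Proof. by rewrite /lin mulr_sumr -big_split; apply: eq_bigr => e _ /=; ring. Qed.

Lemma near_shift (J v : T -> R) (P : (T -> R) -> Prop) :
  (\forall J' \near J, P J') -> \forall t \near (0:R), P (fun e => J e + t * v e).
Proof.
move/nbhs_ballP => [r r0 H].
pose M : R := \sum_(e : T) `|v e| + 1.
have M0 : 0 < M.
  rewrite /M; have : 0 <= \sum_(e : T) `|v e| by apply: sumr_ge0 => e _; exact: normr_ge0.
  lra.
apply: filterS (nbhs0_lt (divr_gt0 r0 M0)) => t ht; apply: H => e /=.
change (`|J e - (J e + t * v e)| < r).
have -> : J e - (J e + t * v e) = - (t * v e) by ring.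
rewrite normrN normrM.
have hv : `|v e| <= M.
  rewrite /M (bigD1 e) //=.
  have : 0 <= \sum_(i : T | i != e) `|v i| by apply: sumr_ge0 => i _; exact: normr_ge0.
  lra.
move: ht; rewrite ltr_pdivlMr // => ht.
apply: (le_lt_trans _ ht); apply: ler_wpM2l => //.
Qed.

Lemma near_neq (t0 : R) : \forall t \near (0:R)^'%classic, t != t0.
Proof.
have [->|h] := eqVneq t0 0; first exact: nbhs_dnbhs_neq.
have ht0 : 0 < `|t0| by rewrite normr_gt0.
apply: filterS (dnbhs0_lt (V:=R) ht0) => t ht; apply/eqP => e.
by move: ht; rewrite e ltxx.
Qed.

Definition u (e : T) : R := 2 ^+ (enum_rank e).

Lemma lin_u_inj (x y : cfg) : x != y -> lin u x != lin u y.
Proof.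
move=> nxy; apply/eqP => h.
have h0 : \sum_(e : T) (sg (x e) - sg (y e)) * 2 ^+ (enum_rank e) = 0.
  have := sum_diff u x y; rewrite h subrr => h1; rewrite -[RHS]h1.
  by apply: eq_bigr => e _; rewrite mulrC.
move: h0; rewrite (reindex (enum_val : 'I_#|{: T}| -> T)); last exact: onW_bij (enum_val_bij _).
under eq_bigr do rewrite enum_valK.
move=> h0.
have two0 : (0:R) < 2 by lra.
have hc := @pow2_inj R #|{: T}| (fun i : 'I_#|{: T}| => sg (x (enum_val i)) - sg (y (enum_val i))) 2 two0.
have hcase : forall i : 'I_#|{: T}|, sg (x (enum_val i)) - sg (y (enum_val i)) = 0 \/
   `|sg (x (enum_val i)) - sg (y (enum_val i))| = 2.
  move=> i; case: (x (enum_val i)); case: (y (enum_val i)); rewrite /sgn.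
  - by left; ring.
  - by right; rewrite (_ : 1 - -1 = 2 :> R) ?ger0_norm //; ring.
  - by right; rewrite (_ : -1 - 1 = -2 :> R) ?normrN ?ger0_norm //; ring.
  - by left; ring.
have hall := hc hcase h0.
 move/eqP: nxy; apply; apply/ffunP => e.
have := hall (enum_rank e); rewrite enum_rankK.
by case: (x e); case: (y e); rewrite /sgn //; lra.
Qed.

End Main2.

Unset Implicit Arguments. Set Strict Implicit.

Section Main3.
Variables (R : realType) (d : nat) (n : 'I_d -> nat).
Variable (E : ecfg n -> ecfg n -> R).
Hypothesis hE0 : forall eta, eta \in SL n -> E eta eta = 0.
Hypothesis hEc : forall eta eta' eta'', eta \in SL n -> eta' \in SL n -> eta'' \in SL n ->
           E eta eta'' = E eta eta' + E eta' eta''.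

Lemma dense (J : edge n -> R) (P : (edge n -> R) -> Prop) :
  (\forall J' \near J, P J') -> exists J', ~ critical E J' /\ P J'.
Proof.
move=> hP.
have h1 : \forall t \near (0:R)^'%classic, P (fun e => J e + t * @u R d n e).
  exact: nbhs_dnbhs (near_shift (@u R d n) hP).
have h2 : \forall t \near (0:R)^'%classic, forall p : ecfg n * ecfg n,
    (p.1 \in SL n) && (p.2 \in SL n) && (p.1 != p.2) ->
    V E (fun e => J e + t * @u R d n e) p.1 != V E (fun e => J e + t * @u R d n e) p.2.
  apply: (filter_forall (dnbhs_filter _)) => -[x y] /=.
  case hc: ((x \in SL n) && (y \in SL n) && (x != y)); last by apply: nearW.
  move/andP: hc => [/andP[hx hy] nxy].
  have hD' : lin (@u R d n) x - lin (@u R d n) y != 0 by rewrite subr_eq0; exact: lin_u_inj.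
  apply: filterS (near_neq ((V E J x - V E J y) / (lin (@u R d n) x - lin (@u R d n) y))) => t ht _.
  apply/eqP => heq; move/eqP: ht; apply.
  move: heq; rewrite /V !lin_shift => heq.
  apply: (mulIf hD'); rewrite divfK //; rewrite mulrBr; move: heq; lra.
have [t [ht1 ht2]] := filter_ex (filterI h1 h2).
exists (fun e => J e + t * @u R d n e); split => //.
apply: (Vnc hE0 hEc) => x y hx hy nxy; apply: (ht2 (x, y)).
by rewrite /= hx hy nxy.
Qed.

End Main3.

Lemma to_arrow (R : realType) (d : nat) (n : 'I_d -> nat) (J : edge n -> R)
  (P : (edge n -> R) -> Prop) :
  (\forall J' \near J, P J') -> \forall J' \near (J : arrow_uniform_type (edge n) R), P J'.
Proof.
move/nbhs_ballP => [r r0 H]; apply/nbhs_ballP; exists r; first exact: r0. move=> J' HJ.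
by apply: H => e; exact: HJ e.
Qed.

Lemma to_prod (R : realType) (d : nat) (n : 'I_d -> nat) (J : edge n -> R)
  (P : (edge n -> R) -> Prop) :
  (\forall J' \near (J : arrow_uniform_type (edge n) R), P J') -> \forall J' \near J, P J'.
Proof.
move/nbhs_ballP => [r r0 H]; apply/nbhs_ballP; exists r; first exact: r0. move=> J' HJ.
by apply: H => e; exact: HJ e.
Qed.

Theorem lemma2p7 (R : realType) (d : nat) (n : 'I_d -> nat)
  (E : ecfg n -> ecfg n -> R)
  (hE0 : forall eta, eta \in SL n -> E eta eta = 0)
  (hEc : forall eta eta' eta'', eta \in SL n -> eta' \in SL n -> eta'' \in SL n ->
           E eta eta'' = E eta eta' + E eta' eta'')
  (b : edge n) :
  (* piecewise affine: finitely many affine pieces, F_b locally equal to one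
     of them around every point off C *)
  (exists (k : nat) (a : 'I_k -> edge n -> R) (c : 'I_k -> R),
     forall J : edge n -> R, ~ critical E J ->
       exists i : 'I_k, \forall J' \near J,
         flex E b J' = c i + \sum_(e : edge n) a i e * J' e)
  /\
  (* partial derivatives *)
  (forall (J : edge n -> R) (e : edge n), ~ critical E J ->
     is_derive (0 : R) (1 : R) (fun t : R => flex E b (coupling_shift J e t))
       (if e \in droplet_boundary E J b then 2 * sgn R (gs E J e) else 0))
  /\
  (* existence of a continuous extension to R^{Lambda^*} *)
  (exists G : (edge n -> R) -> R, continuous G /\
     forall J, ~ critical E J -> G J = flex E b J)
  /\
  (* uniqueness of the continuous extension *)
  (forall G1 G2 : (edge n -> R) -> R, continuous G1 -> continuous G2 ->
     (forall J, ~ critical E J -> G1 J = flex E b J) ->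
     (forall J, ~ critical E J -> G2 J = flex E b J) ->
     G1 = G2).
Proof.
split.
  exists #|{: ecfg n * ecfg n * bool}|.
  exists (fun i e => let t := (enum_val i : ecfg n * ecfg n * bool) in
            sgn R t.2 * (sgn R (t.1.1 e) - sgn R (t.1.2 e))).
  exists (fun i => let t := (enum_val i : ecfg n * ecfg n * bool) in
            sgn R t.2 * (E t.1.2 (eta0 n) - E t.1.1 (eta0 n))).
  move=> J nc; exists (enum_rank (aP E b J, aM E b J, sJ E b J)).
  apply: filterS (flex_local hE0 hEc b nc) => J' ->; rewrite enum_rankK /=.
  have -> : \sum_(e : edge n) sgn R (sJ E b J) * (sgn R (aP E b J e) - sgn R (aM E b J e)) * J' e
     = sgn R (sJ E b J) * (lin J' (aP E b J) - lin J' (aM E b J)).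
    by rewrite -sum_diff mulr_sumr; apply: eq_bigr => e _; ring.
  rewrite /V; ring.
split.
  move=> J e nc.
  pose ind := fun e' : edge n => if e' == e then (1:R) else 0.
  have hs : forall t, coupling_shift J e t = (fun e' => J e' + t * ind e').
    by move=> t; apply: funext => e'; rewrite /coupling_shift /ind; case: (e' == e); ring.
  have hlin : forall x, lin ind x = sgn R (x e).
    move=> x; rewrite /lin (bigD1 e) //= /ind eqxx mul1r big1 ?addr0 // => e' /negbTE ->.
    by rewrite mul0r.
  pose m := sgn R (sJ E b J) * (sgn R (aP E b J e) - sgn R (aM E b J e)).
  pose f0 := sgn R (sJ E b J) * (V E J (aM E b J) - V E J (aP E b J)).
  have hnear : \forall t \near (0:R), f0 + t * m = flex E b (coupling_shift J e t).
    apply: filterS (near_shift ind (flex_local hE0 hEc b nc)) => t ht.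
    rewrite hs ht /f0 /m /V !lin_shift !hlin; ring.
  apply: (near_eq_is_derive hnear).
  apply: is_derive_eq.
  rewrite scale0r !add0r -[m%:A]/(m * 1) mulr1 /m.
  rewrite /droplet_boundary inE !(gs_b_amin hE0 hEc) // (gs_eq hE0 hEc b nc).
  rewrite -/(aP E b J) -/(aM E b J) /sgn.
  by case: (sJ E b J); case: (aP E b J e); case: (aM E b J e) => /=; ring.
split.
  exists (G E b); split; last by move=> J nc; rewrite (flex_G hE0 hEc b nc).
  move=> J; have FF : Filter (nbhs (J : arrow_uniform_type (edge n) R)) := nbhs_filter _.
  apply/(cvgrPdist_lt (FF:=FF)) => eps e0.
  have e2 : 0 < eps / 2 by apply: divr_gt0 => //; lra.
  apply: to_arrow; apply: filterS (S_ball J e2) => J' hS.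
  have := G_lip E b J J'; lra.
move=> G1 G2 c1 c2 h1 h2; apply: funext => J.
apply/eqP; rewrite -subr_eq0 -normr_eq0; apply/negPn/negP => hne.
have d0 : 0 < `|G1 J - G2 J| / 2.
  by apply: divr_gt0 => //; rewrite lt0r hne normr_ge0.
have n1 := cvgr_dist_lt (FF:=nbhs_filter _) _ _ (c1 J) _ d0.
have n2 := cvgr_dist_lt (FF:=nbhs_filter _) _ _ (c2 J) _ d0.
have [J' [nc [a1 a2]]] := @dense R d n E hE0 hEc J _ (filterI n1 n2).
have e1 := h1 J' nc; have e2 := h2 J' nc.
have : `|G1 J - G2 J| <= `|G1 J - G1 J'| + `|G2 J - G2 J'|.
  rewrite (_ : G1 J - G2 J = (G1 J - G1 J') - (G2 J - G2 J')); last by rewrite e1 e2; ring.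
  exact: ler_normB.
move: a1 a2 => /= a1 a2; lra.
Qed.
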